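(* Let $(V,\mathrm{dist})$ be a metric space and let $B\subseteq A\subseteq V$ be finite (multi)sets. Then $$\mathrm{MaxCut}(B)+\tfrac14\,\mathrm{cut}(A\setminus B,A\setminus B)+\tfrac12\,\mathrm{cut}(A\setminus B,B)\ \le\ \mathrm{MaxCut}(A).$$
   Context: For $S,T\subseteq V$, $\mathrm{cut}(S,T):=\sum_{x\in S}\sum_{y\in T}\mathrm{dist}(x,y)$, and $\mathrm{MaxCut}(S):=\max_{T\subseteq S}\mathrm{cut}(T,S\setminus T)$. *)

(* Defs.v *)
From mathcomp Require Import all_boot all_order all_algebra.
From mathcomp Require Import reals.
Set Implicit Arguments. Unset Strict Implicit. Unset Printing Implicit Defensive.
Import Order.TTheory GRing.Theory Num.Theory.
Local Open Scope ring_scope.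

Definition is_metric (R : realType) (V : Type) (dist : V -> V -> R) : Prop :=
  [/\ forall x y, 0 <= dist x y,
      forall x y, dist x y = 0 <-> x = y,
      forall x y, dist x y = dist y x
    & forall x y z, dist x z <= dist x y + dist y z].

(* Finite multisets of points of V are represented by a finite index type I
   with a point map p : I -> V; a sub(multi)set is a set of indices. *)
Definition cut (R : realType) (V : Type) (dist : V -> V -> R)
  (I : finType) (p : I -> V) (S T : {set I}) : R :=
  \sum_(x in S) \sum_(y in T) dist (p x) (p y).

(* MaxCut(S) = max over T subset of S of cut(T, S \ T).  The family always
   contains T = set0 with value 0, so the neutral element 0 is harmless. *)
Definition MaxCut (R : realType) (V : Type) (dist : V -> V -> R)
  (I : finType) (p : I -> V) (S : {set I}) : R :=
  \big[Num.max/0]_(T : {set I} | T \subset S) cut dist p T (S :\: T).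

(* Main.v *)
Require Import Defs.
From mathcomp Require Import all_boot all_order all_algebra.
From mathcomp Require Import reals.
From mathcomp Require Import lra.
Import Order.TTheory GRing.Theory Num.Theory.
Local Open Scope ring_scope.
Set Implicit Arguments. Unset Strict Implicit.

Definition Dp (R : realType) (V : Type) (dist : V -> V -> R)
  (I : finType) (p : I -> V) (a : I) (S : {set I}) : R :=
  \sum_(y in S) dist (p a) (p y).

Lemma cutU1l (R : realType) (V : Type) (dist : V -> V -> R)
  (I : finType) (p : I -> V) (a : I) (S T : {set I}) : a \notin S ->
  cut dist p (a |: S) T = Dp dist p a T + cut dist p S T.
Proof. by move=> H; rewrite /cut big_setU1. Qed.

Lemma cutU1r (R : realType) (V : Type) (dist : V -> V -> R)
  (I : finType) (p : I -> V) (a : I) (S T : {set I}) :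
  (forall x y, dist x y = dist y x) -> a \notin T ->
  cut dist p S (a |: T) = Dp dist p a S + cut dist p S T.
Proof.
move=> sym H; rewrite /cut.
under eq_bigr => x _ do rewrite big_setU1 //=.
rewrite big_split /=; congr (_ + _); apply: eq_bigr => x _; exact: sym.
Qed.

Lemma cut0l (R : realType) (V : Type) (dist : V -> V -> R)
  (I : finType) (p : I -> V) (T : {set I}) : cut dist p set0 T = 0.
Proof. by rewrite /cut big_set0. Qed.

Lemma Dsplit (R : realType) (V : Type) (dist : V -> V -> R)
  (I : finType) (p : I -> V) (a : I) (Y U : {set I}) : Y \subset U ->
  Dp dist p a U = Dp dist p a Y + Dp dist p a (U :\: Y).
Proof. by move=> H; rewrite /Dp (big_setID Y) /= (setIidPr H). Qed.

Lemma greedy (R : realType) (V : Type) (dist : V -> V -> R)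
  (I : finType) (p : I -> V) (c : I) (Y U : {set I}) :
  (forall x y, dist x y = dist y x) -> c \notin U -> Y \subset U ->
  exists Y' : {set I}, Y' \subset c |: U /\
    cut dist p Y (U :\: Y) + 1/2 * Dp dist p c U <= cut dist p Y' ((c |: U) :\: Y').
Proof.
move=> sym cU YU.
have cY : c \notin Y by apply: contra cU; apply: (subsetP YU).
have cUY : c \notin U :\: Y by rewrite inE negb_and cU orbT.
have := Dsplit dist p c YU.
set a := Dp dist p c Y; set b := Dp dist p c (U :\: Y) => E.
have [ab|ba] := leP b a.
- exists Y; split; first by apply: subset_trans YU (subsetUr _ _).
  have -> : (c |: U) :\: Y = c |: (U :\: Y).
    apply/setP => x; rewrite !inE; case: eqP => // ->.
    by move: cY; case: (c \in Y).
  rewrite cutU1r // -/a E; lra.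
- exists (c |: Y); split; first by rewrite setUS.
  have -> : (c |: U) :\: (c |: Y) = U :\: Y.
    apply/setP => x; rewrite !inE; case: (x =P c) => [->|] /=; last by [].
    by rewrite (negbTE cU) andbF.
  rewrite cutU1l // -/b E; lra.
Qed.

Lemma main_ind (R : realType) (V : Type) (dist : V -> V -> R)
  (I : finType) (p : I -> V) (B T : {set I}) :
  (forall x y, dist x y = dist y x) -> (forall x, dist x x = 0) ->
  T \subset B ->
  forall n (C : {set I}), #|C| = n -> [disjoint B & C] ->
  exists Y : {set I}, Y \subset B :|: C /\
    cut dist p T (B :\: T) + 1/2 * cut dist p C B + 1/4 * cut dist p C C
    <= cut dist p Y ((B :|: C) :\: Y).
Proof.
move=> sym d0 TB; elim=> [|n IH] C.
  move/cards0_eq => -> _; exists T; rewrite setU0 !cut0l; split => //; lra.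
move=> cC dBC.
have [c cin] : exists c, c \in C.
  by apply/set0Pn; rewrite -card_gt0 cC.
set C' := C :\ c.
have eC : C = c |: C' by rewrite setD1K.
have cC' : #|C'| = n by move: cC; rewrite eC cardsU1 !inE eqxx /=; case.
have dBC' : [disjoint B & C'].
  by apply: disjointWr dBC; apply: subsetDl.
have [Y [YU HY]] := IH C' cC' dBC'.
have cB : c \notin B by apply/negP => cb; rewrite (disjointFr dBC cb) in cin.
have cnC' : c \notin C' by rewrite !inE eqxx.
have cU : c \notin B :|: C' by rewrite inE negb_or cB.
have [Y' [Y'U HY']] := greedy p sym cU YU.
exists Y'; split; first by rewrite eC setUCA.
move: HY'; rewrite -setUCA -eC => HY'.
have E1 : cut dist p C B = Dp dist p c B + cut dist p C' B by rewrite eC cutU1l.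
have E2 : cut dist p C C = dist (p c) (p c) + Dp dist p c C' + Dp dist p c C'
   + cut dist p C' C'.
  rewrite {1}eC cutU1l // {1}eC /Dp big_setU1 //= -/(Dp _ _ _ _) eC cutU1r //.
  rewrite -/(Dp dist p c C'); lra.
have E3 : Dp dist p c (B :|: C') = Dp dist p c B + Dp dist p c C'.
  rewrite (Dsplit _ _ _ (subsetUl B C')) setDUl setDv set0U; congr (_ + _); congr Dp; apply/setDidPl; by rewrite disjoint_sym.
rewrite d0 in E2.
lra.
Qed.

Theorem fact4p6 (R : realType) (V : Type) (dist : V -> V -> R)
  (I : finType) (p : I -> V) (A B : {set I}) :
  is_metric dist -> B \subset A ->
  MaxCut dist p B + (1 / 4) * cut dist p (A :\: B) (A :\: B)
    + (1 / 2) * cut dist p (A :\: B) B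
  <= MaxCut dist p A.
Proof.
case=> _ d0 sym _ BA.
have d0' : forall x, dist x x = 0 by move=> x; apply/d0.
have key : forall T : {set I}, T \subset B -> cut dist p T (B :\: T)
    + (1 / 4) * cut dist p (A :\: B) (A :\: B)
    + (1 / 2) * cut dist p (A :\: B) B <= MaxCut dist p A.
  move=> T TB.
  have dj : [disjoint B & A :\: B].
    by rewrite -setI_eq0; apply/eqP/setP => x; rewrite !inE; case: (x \in B).
  have [Y [YU HY]] := main_ind p sym d0' TB (erefl _) dj.
  have eA : B :|: (A :\: B) = A.
    by apply/setP => x; rewrite !inE; case xB: (x \in B) => //=; rewrite (subsetP BA).
  rewrite eA in YU HY.
  apply: le_trans (_ : cut dist p Y (A :\: Y) <= _).
    lra.
  rewrite /MaxCut; exact: (le_bigmax_cond 0 (fun T => cut dist p T (A :\: T)) YU).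
have k0 := key set0 (sub0set _).
rewrite cut0l in k0.
have H : MaxCut dist p B <= MaxCut dist p A
    - (1 / 4) * cut dist p (A :\: B) (A :\: B)
    - (1 / 2) * cut dist p (A :\: B) B.
  rewrite {1}/MaxCut; apply: bigmax_le; first lra.
  move=> T TB; have := key T TB; rewrite /MaxCut; lra.
lra.
Qed.
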